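(* Let $\theta>0$, $\beta>1$, $g,h,m\ge0$, let $T$ be a positive integer, and let $c$ be the constant defined in the context. For integers $s<T$ and $a\ge0$, let $t_{(s,a)}\in\{s+1,\ldots,T+1\}$ be a minimizer of $t\mapsto f_{(s,a)}(t)$ over $\{s+1,\ldots,T+1\}$. Let $\delta\ge1$ be an integer such that $s+\delta<t_{(s,a)}\le T$. Then $t_{(s,a)}$ is also a minimizer of $t\mapsto f_{(s+\delta,a+\delta)}(t)$ over $\{s+\delta+1,\ldots,T+1\}$; that is, $t_{(s+\delta,a+\delta)}=t_{(s,a)}$.
   Context: $L$ has the discrete Weibull distribution: $\mathrm{P}(L>k)=e^{-\theta k^\beta}$ for $k=0,1,2,\ldots$. For integer $t\ge1$, $$q_t=\frac{(1-e^{-\theta t^\beta})g+e^{-\theta t^\beta}(h+mt)}{\sum_{k=1}^t (e^{-\theta (k-1)^\beta}-e^{-\theta k^\beta})k+e^{-\theta t^\beta}t},\qquad c=\min_{t\ge1}q_t$$ (assumed attained). For an integer age $a\ge0$, $L_a$ denotes a random variable distributed as $L-a$ conditionally on $L>a$, so $\mathrm{P}(L_a>k)=\exp\{\theta(a^\beta-(a+k)^\beta)\}$ for $k\ge0$. For integers $s<T$, $a\ge0$, the total maintenance cost over the planning period $\{s,\ldots,T\}$ when the next preventive maintenance is planned at time $t$ and the failure occurs at time $u$ is $$Q_{(s,a)}(t,u)=[g+(T-u)c]\,1_{\{u\le t\}}+[h+(t-s+a)m+(T-t)c]\,1_{\{u>t\}}\quad (t\in\{s+1,\ldots,T\}),$$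 $$Q_{(s,a)}(T+1,u)=[g+(T-u)c]\,1_{\{u\le T\}}$$ ($t=T+1$ means no preventive maintenance is planned). The objective is $f_{(s,a)}(t)=\mathrm{E}\big[Q_{(s,a)}(t,s+L_a)\big]$ for $t\in\{s+1,\ldots,T+1\}$ (equivalently, a PM plan is a binary vector $(x_{s+1},\ldots,x_{T+1})$ with exactly one entry equal to $1$, at position $t$), and $f^*_{(s,a)}=\min_{t\in\{s+1,\ldots,T+1\}}f_{(s,a)}(t)$, with $t_{(s,a)}$ denoting a minimizer. *)

(* Defs.v *)
From Stdlib Require Import Reals ZArith Lia Lra.
From Coquelicot Require Import Coquelicot.
Open Scope R_scope.

Definition pw (beta : R) (k : nat) : R :=
  match k with O => 0 | S _ => Rpower (INR k) beta end.

(* P(L > k) = exp(-theta k^beta) *)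
Definition survL (theta beta : R) (k : nat) : R := exp (- theta * pw beta k).

Fixpoint sumk (f : nat -> R) (n : nat) : R :=
  match n with O => 0 | S n' => sumk f n' + f n end.

Definition qt (theta beta g h m : R) (t : nat) : R :=
  ((1 - survL theta beta t) * g + survL theta beta t * (h + m * INR t)) /
  (sumk (fun k => (survL theta beta (k - 1) - survL theta beta k) * INR k) t
   + survL theta beta t * INR t).

Definition is_c (theta beta g h m c : R) : Prop :=
  (exists t : nat, (1 <= t)%nat /\ qt theta beta g h m t = c) /\
  (forall t : nat, (1 <= t)%nat -> c <= qt theta beta g h m t).

(* P(L_a > k) = exp(theta (a^beta - (a+k)^beta)) *)
Definition survLa (theta beta : R) (a k : nat) : R :=
  exp (theta * (pw beta a - pw beta (a + k))).

(* P(L_a = k) for k >= 1 *)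
Definition pmfLa (theta beta : R) (a k : nat) : R :=
  survLa theta beta a (k - 1) - survLa theta beta a k.

(* Q_{(s,a)}(t,u); for t = T+1 (no PM planned) the second clause applies. *)
Definition Qcost (g h m c : R) (T s : Z) (a : nat) (t u : Z) : R :=
  if (t <=? T)%Z then
    (if (u <=? t)%Z then g + IZR (T - u) * c
     else h + IZR (t - s + Z.of_nat a) * m + IZR (T - t) * c)
  else
    (if (u <=? T)%Z then g + IZR (T - u) * c else 0).

(* f_{(s,a)}(t) = E[Q_{(s,a)}(t, s + L_a)], L_a taking values k = 1, 2, ... *)
Definition fcost (theta beta g h m c : R) (T s : Z) (a : nat) (t : Z) : R :=
  Series (fun n : nat =>
    pmfLa theta beta a (S n) * Qcost g h m c T s a t (s + Z.of_nat (S n))).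

Definition is_minimizer (theta beta g h m c : R) (T s : Z) (a : nat) (t : Z) : Prop :=
  (s + 1 <= t <= T + 1)%Z /\
  forall t' : Z, (s + 1 <= t' <= T + 1)%Z ->
    fcost theta beta g h m c T s a t <= fcost theta beta g h m c T s a t'.

(* Main.v *)
Require Import Defs.
From Stdlib Require Import Reals ZArith Lia Lra.
From Coquelicot Require Import Coquelicot.
Open Scope R_scope.

Lemma pw_mono (beta : R) (k : nat) : 0 < beta -> pw beta k <= pw beta (S k).
Proof.
  intros Hb. destruct k as [|k].
  - simpl. unfold Rpower. left. apply exp_pos.
  - unfold pw. apply Rle_Rpower_l; [lra|]. split.
    + apply lt_0_INR; lia.
    + apply le_INR; lia.
Qed.

Lemma surv_decr theta beta a n : 0 < theta -> 0 < beta ->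
  survLa theta beta a (S n) <= survLa theta beta a n.
Proof.
  intros Ht Hb. unfold survLa.
  rewrite Nat.add_succ_r. pose proof (pw_mono beta (a + n) Hb).
  assert (H0 : theta * (pw beta a - pw beta (S (a + n))) <= theta * (pw beta a - pw beta (a + n)))
    by (apply Rmult_le_compat_l; lra).
  destruct H0 as [H0|H0]; [left; apply exp_increasing; exact H0 | right; rewrite H0; reflexivity].
Qed.

Lemma surv_mult theta beta a d j :
  survLa theta beta a (d + j) = survLa theta beta a d * survLa theta beta (a + d) j.
Proof.
  unfold survLa. rewrite <- exp_plus. rewrite Nat.add_assoc. f_equal. ring.
Qed.

Lemma pmf_shift theta beta a d n :
  pmfLa theta beta a (d + S n) = survLa theta beta a d * pmfLa theta beta (a + d) (S n).
Proof.
  unfold pmfLa. replace (d + S n - 1)%nat with (d + (S n - 1))%nat by lia.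
  rewrite !surv_mult. ring.
Qed.

Lemma Q_shift g h m c T s a d t n :
  Qcost g h m c T s a t (s + Z.of_nat (d + S n)) =
  Qcost g h m c T (s + Z.of_nat d) (a + d) t (s + Z.of_nat d + Z.of_nat (S n)).
Proof.
  unfold Qcost. rewrite !Nat2Z.inj_add.
  replace (s + (Z.of_nat d + Z.of_nat (S n)))%Z with (s + Z.of_nat d + Z.of_nat (S n))%Z by ring.
  replace (t - (s + Z.of_nat d) + (Z.of_nat a + Z.of_nat d))%Z with (t - s + Z.of_nat a)%Z by ring.
  reflexivity.
Qed.

Lemma Q_early g h m c T s a t u : (u <= t)%Z -> (u <= T)%Z ->
  Qcost g h m c T s a t u = g + IZR (T - u) * c.
Proof.
  intros H1 H2. unfold Qcost.
  destruct (Z.leb_spec t T); destruct (Z.leb_spec u t); destruct (Z.leb_spec u T);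
    solve [lia | reflexivity].
Qed.

Lemma Q_late g h m c T s a t u : (t <= T + 1)%Z -> (T < u)%Z ->
  Qcost g h m c T s a t u = Qcost g h m c T s a t (T + 1).
Proof.
  intros H1 H2. unfold Qcost.
  destruct (Z.leb_spec t T); destruct (Z.leb_spec u t); destruct (Z.leb_spec u T);
  destruct (Z.leb_spec (T+1) t); destruct (Z.leb_spec (T+1) T);
    solve [lia | reflexivity].
Qed.

Lemma telescope (u : nat -> R) : ex_finite_lim_seq u ->
  ex_series (fun n => u n - u (S n)).
Proof.
  intros [l Hl]. exists (u 0%nat - l). unfold is_series.
  change (is_lim_seq (sum_n (fun n => u n - u (S n))) (u 0%nat - l)).
  apply (is_lim_seq_ext (fun N => u 0%nat - u (S N))).
  - intro N. induction N as [|N IH].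
    + rewrite sum_O. reflexivity.
    + rewrite sum_Sn, <- IH. unfold plus; simpl. ring.
  - apply (is_lim_seq_minus' (fun _ => u 0%nat) (fun N => u (S N))).
    + apply is_lim_seq_const.
    + apply (is_lim_seq_incr_1 u (Finite l)). exact Hl.
Qed.

Lemma ex_pmf theta beta a : 0 < theta -> 0 < beta ->
  ex_series (fun n => pmfLa theta beta a (S n)).
Proof.
  intros Ht Hb.
  apply (ex_series_ext (fun n => survLa theta beta a n - survLa theta beta a (S n))).
  - intro n. unfold pmfLa. replace (S n - 1)%nat with n by lia. reflexivity.
  - apply telescope. apply (ex_finite_lim_seq_decr _ 0).
    + intro n. apply surv_decr; auto.
    + intro n. unfold survLa. left. apply exp_pos.
Qed.

Lemma ex_terms theta beta g h m c T s a t : 0 < theta -> 0 < beta ->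
  (s < T)%Z -> (t <= T + 1)%Z ->
  ex_series (fun n => pmfLa theta beta a (S n) * Qcost g h m c T s a t (s + Z.of_nat (S n))).
Proof.
  intros Ht Hb Hs Htt.
  apply (proj2 (ex_series_incr_n _ (Z.to_nat (T - s)))).
  eapply ex_series_ext.
  2:{ apply (ex_series_scal_l (Qcost g h m c T s a t (T + 1))).
      apply (proj1 (ex_series_incr_n (fun n => pmfLa theta beta a (S n)) (Z.to_nat (T - s)))).
      apply ex_pmf; auto. }
  intro k. simpl. rewrite (Q_late _ _ _ _ _ _ _ t (s + Z.of_nat (S (Z.to_nat (T - s) + k)))) by lia.
  unfold scal; simpl. unfold mult; simpl. ring.
Qed.

Lemma decomp theta beta g h m c T s a d t : 0 < theta -> 0 < beta ->
  (1 <= d)%nat -> (s + Z.of_nat d < T)%Z -> (s + Z.of_nat d + 1 <= t <= T + 1)%Z ->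
  fcost theta beta g h m c T s a t =
  sum_f_R0 (fun n => pmfLa theta beta a (S n) * (g + IZR (T - (s + Z.of_nat (S n))) * c)) (pred d)
  + survLa theta beta a d * fcost theta beta g h m c T (s + Z.of_nat d) (a + d) t.
Proof.
  intros Ht Hb Hd Hs Htt. unfold fcost at 1.
  rewrite (Series_incr_n _ d) by (try lia; apply ex_terms; auto; lia).
  f_equal.
  - apply sum_eq. intros i Hi. rewrite Q_early; [reflexivity| |];
      destruct d as [|d]; simpl in Hi; lia.
  - unfold fcost. rewrite <- Series_scal_l. apply Series_ext. intro n.
    rewrite <- Nat.add_succ_r, pmf_shift, Q_shift. ring.
Qed.

Theorem proposition2 (theta beta g h m c : R) (T s : Z) (a delta : nat) (tsa : Z) :
  0 < theta -> 1 < beta -> 0 <= g -> 0 <= h -> 0 <= m ->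
  (0 < T)%Z ->
  is_c theta beta g h m c ->
  (s < T)%Z ->
  is_minimizer theta beta g h m c T s a tsa ->
  (1 <= delta)%nat ->
  (s + Z.of_nat delta < tsa <= T)%Z ->
  is_minimizer theta beta g h m c T (s + Z.of_nat delta) (a + delta) tsa.
Proof.
  intros Ht Hb _ _ _ _ _ Hs [Hr Hmin] Hd Htsa.
  split; [lia|]. intros t' Ht'.
  assert (Hb0 : 0 < beta) by lra.
  pose proof (Hmin t' ltac:(lia)) as Hle.
  rewrite (decomp theta beta g h m c T s a delta tsa) in Hle by (auto; lia).
  rewrite (decomp theta beta g h m c T s a delta t') in Hle by (auto; lia).
  apply (Rmult_le_reg_l (survLa theta beta a delta)).
  - unfold survLa. apply exp_pos.
  - lra.
Qed.
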